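(* For every $n\ge 0$, $$B(2n,0)=\sum_{\lambda\in\Lambda_n}\prod_{i=1}^n\lambda_i^2 .$$
   Context: A labeled ballot path is a lattice path from $(0,0)$ with steps $u=(1,1)$, $d=(1,-1)$ never going below the $x$-axis, each step carrying an integer label between $0$ and its height, where the height of a step is the smaller $y$-coordinate of its endpoints. $B(n,k)$ is the number of labeled ballot paths ending at $(n,k)$; thus $B(2n,0)$ counts labeled Dyck paths of length $2n$. $\Lambda_n$ is the set of integer sequences $\lambda_1\cdots\lambda_n$ with $\lambda_1=1$ and $1\le\lambda_j\le\lambda_{j-1}+1$ for $2\le j\le n$. *)

(* Defs.v *)
From mathcomp Require Import all_boot.
Set Implicit Arguments. Unset Strict Implicit. Unset Printing Implicit Defensive.

(* A labeled step: (true, l) = up step u=(1,1), (false, l) = down step d=(1,-1),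
   with integer label l.  [lbp_from y s k] : the labeled step sequence s, started
   at height y, never goes below the x-axis, every label lies between 0 and the
   height of its step (= smaller y-coordinate of its endpoints), and s ends at
   height k. *)
Fixpoint lbp_from (y : nat) (s : seq (bool * nat)) (k : nat) : bool :=
  match s with
  | [::] => y == k
  | (true, l) :: t => (l <= y) && lbp_from y.+1 t k
  | (false, l) :: t => (0 < y) && (l <= y.-1) && lbp_from y.-1 t k
  end.

Definition labeled_ballot (s : seq (bool * nat)) (k : nat) : bool :=
  lbp_from 0 s k.

(* B(n,k): number of labeled ballot paths ending at (n,k).  Labels are at most
   the height, hence at most n, so it suffices to enumerate labels in 'I_n.+1. *)
Definition B (n k : nat) : nat :=
  #|[set p : n.-tuple (bool * 'I_n.+1) |
      labeled_ballot [seq (x.1, nat_of_ord x.2) | x <- p] k]|.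

Definition in_Lambda (s : seq nat) : bool :=
  match s with
  | [::] => true
  | x :: t => (x == 1) && path (fun a b => (1 <= b) && (b <= a.+1)) x t
  end.

(* Lambda_n, as n-tuples; since lambda_j <= j <= n, values lie in 'I_n.+1. *)
Definition Lambda (n : nat) : {set n.-tuple 'I_n.+1} :=
  [set l : n.-tuple 'I_n.+1 | in_Lambda [seq nat_of_ord i | i <- l]].

(* Main.v *)
Require Import Defs.
From mathcomp Require Import all_boot.
From Stdlib Require Import Lia Ring.
From Stdlib Require ArithRing.

Set Implicit Arguments. Unset Strict Implicit. Unset Printing Implicit Defensive.

Lemma sum_tupleS (T : finType) m (F : m.+1.-tuple T -> nat) :
  \sum_(p : m.+1.-tuple T) F p =
  \sum_(x : T) \sum_(p : m.-tuple T) F [tuple of x :: p].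
Proof.
rewrite pair_bigA /=.
rewrite (reindex (fun q : T * m.-tuple T => [tuple of q.1 :: q.2])) //=.
exists (fun p : m.+1.-tuple T => (thead p, [tuple of behead p])).
  by move=> [x p] _ /=; congr (_, _); apply: val_inj.
by move=> p _; rewrite [RHS]tuple_eta.
Qed.

Lemma andb_nat (a b : bool) : ((a && b) : nat) = a * b.
Proof. by case: a; case: b. Qed.

Lemma sum_le N z : \sum_(l < N) ((l <= z) : nat) = minn N z.+1.
Proof.
elim: N => [|N IH]; first by rewrite big_ord0.
rewrite big_ord_recr /= IH.
case: (leqP N z) => h.
  by rewrite (minn_idPl (leqW h)) (@minn_idPl N.+1 z.+1 h) addn1.
by rewrite (minn_idPr h) (@minn_idPr N.+1 z.+1 (ltnW h)) addn0.
Qed.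

Fixpoint W m y k : nat :=
  match m with
  | 0 => (y == k : nat)
  | m'.+1 => y.+1 * W m' y.+1 k + y * W m' y.-1 k
  end.

Lemma cntB N m y k : y + m < N ->
  \sum_(p : m.-tuple (bool * 'I_N))
     (lbp_from y [seq (x.1, nat_of_ord x.2) | x <- p] k : nat) = W m y k.
Proof.
elim: m y => [|m IH] y hy.
  rewrite (big_pred1 [tuple]) //= => p; case: p => [[]] // pf; symmetry; apply/eqP; exact: val_inj.
rewrite sum_tupleS /=.
rewrite -(pair_bigA _ (fun (b : bool) (l : 'I_N) => \sum_(p : m.-tuple (bool * 'I_N))
        ((if b then (l <= y) && lbp_from y.+1 [seq (x0.1, nat_of_ord x0.2) | x0 <- p] k
         else (0 < y) && (l <= y.-1) && lbp_from y.-1 [seq (x0.1, nat_of_ord x0.2) | x0 <- p] k) : nat))) /=.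
rewrite big_bool /=.
have h1 : y.+1 + m < N by rewrite addSn -addnS.
have h2 : y.-1 + m < N by apply: leq_ltn_trans hy; rewrite leq_add ?leq_pred.
rewrite (eq_bigr (fun j : 'I_N => (j <= y) * W m y.+1 k)); last first.
  by move=> j _; under eq_bigr => p _ do rewrite andb_nat; rewrite -big_distrr /= IH.
rewrite [X in _ + X](eq_bigr (fun j : 'I_N => ((0 < y) && (j <= y.-1)) * W m y.-1 k)); last first.
  by move=> j _; under eq_bigr => p _ do rewrite andb_nat; rewrite -big_distrr /= IH.
rewrite -!big_distrl /= sum_le (minn_idPr (_ : y.+1 <= N)); last by apply: leq_ltn_trans hy; rewrite leq_addr.
congr (_ + _ * _); case: y hy {h1 h2} => [|y] hy; first by rewrite big1.
rewrite /= sum_le (minn_idPr _) //.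
by apply: leq_trans hy; rewrite ltnW // ltnS leq_addr.
Qed.

Definition rel (a b : nat) : bool := (1 <= b) && (b <= a.+1).

Fixpoint R n a : nat :=
  if n is n'.+1 then \sum_(b < a.+2) b ^ 2 * R n' b else 1.

Lemma cntR N n a : a + n < N ->
  \sum_(p : n.-tuple 'I_N)
     (path rel a [seq nat_of_ord i | i <- p] : nat) * \prod_(i <- p) (nat_of_ord i) ^ 2
  = R n a.
Proof.
elim: n a => [|n IH] a ha.
  rewrite (big_pred1 [tuple]) //= => [|p]; first by rewrite big_nil.
  case: p => [[]] // pf; symmetry; apply/eqP; exact: val_inj.
rewrite sum_tupleS /=.
rewrite (eq_bigr (fun x : 'I_N => (x <= a.+1) * (x ^ 2 * R n x))); last first.
  move=> x _.
  under eq_bigr => p _ do rewrite big_cons andb_nat mulnACA.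
  rewrite -big_distrr /=.
  case: (leqP x a.+1) => hx.
    rewrite IH; last by apply: leq_trans ha; rewrite addnS ltnS -addSn leq_add2r.
    rewrite /rel hx andbT mul1n; by case: (posnP x) => [->|]; rewrite ?mul1n.
  by rewrite /rel (leqNgt x) hx andbF.
rewrite (big_ord_widen N (fun x => x ^ 2 * R n x)); last by apply: leq_trans ha; rewrite ltnS -addSnnS leq_addr.
rewrite [RHS]big_mkcond /=; apply: eq_bigr => i _; rewrite ltnS; by case: (i <= a.+1); rewrite ?mul1n.
Qed.

Lemma W_big m y : m < y -> W m y 0 = 0.
Proof.
elim: m y => [|m IH] [|y] //= h.
rewrite (IH y.+2) ?(IH y) //.
  by rewrite !muln0.
by rewrite ltnS in h; apply: ltnW; apply: ltnW.
Qed.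

Lemma W_diag a : W a a 0 = a`!.
Proof.
elim: a => [|a IH] //=.
by rewrite W_big // IH muln0 add0n factS.
Qed.

Lemma R_rec n a :
  R n.+1 a.+1 = a.+2 ^ 2 * R n a.+2 + R n.+1 a.
Proof. by rewrite /= big_ord_recr /= addnC. Qed.

Lemma W_R n a : W (2 * n + a) a 0 = a`! * R n a.
Proof.
elim: n a => [|n IHn] a.
  by rewrite muln0 add0n W_diag /= muln1.
elim: a => [|a IHa].
  have -> : 2 * n.+1 + 0 = (2 * n + 1).+1 by rewrite addn0 mulnS addnC addn1 addn2.
  rewrite /= IHn mul0n addn0 big_ord_recr /= big_ord1 /= mul0n add0n.
  by rewrite !mul1n.
have -> : 2 * n.+1 + a.+1 = (2 * n + a.+2).+1.
  by rewrite -!plusE -!multE; lia.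
rewrite [W _ _ _]/= IHn.
have -> : 2 * n + a.+2 = 2 * n.+1 + a by rewrite -!plusE -!multE; lia.
rewrite R_rec IHa !factS !expnS expn0 muln1.
move: (a`!) (R n a.+2) (R n.+1 a) => f r s.
rewrite -!multE -!plusE; nia.
Qed.

Lemma in_Lambda_path s : in_Lambda s = path rel 0 s.
Proof.
case: s => [|x t] //=.
by congr (_ && _); rewrite /rel eqn_leq andbC.
Qed.

Theorem corollary4p3 (n : nat) :
  B (2 * n) 0 =
  \sum_(l in Lambda n) \prod_(i <- l) (nat_of_ord i) ^ 2.
Proof.
have hL : B (2 * n) 0 = W (2 * n) 0 0.
  rewrite /B -(cntB (N := (2 * n).+1)) //.
  rewrite -sum1_card big_mkcond /=; apply: eq_bigr => p _.
  by rewrite inE /labeled_ballot; case: (lbp_from _ _ _).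
rewrite hL -(addn0 (2 * n)) W_R mul1n -(cntR (N := n.+1)) ?addn0 ?add0n //.
rewrite [RHS]big_mkcond /=; apply: eq_bigr => p _.
rewrite inE in_Lambda_path.
by case: (path _ _ _); rewrite ?mul1n ?mul0n.
Qed.
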